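(* Let $(S,\oplus,\odot)$ be a semiring whose addition $\oplus$ is commutative (multiplication $\odot$ need not be commutative). For all positive integers $n,p,q$ with $p+q\le n$ and all maps $f:\binom{[n]}{p}\to S$, $g:\binom{[n]}{q}\to S$, the value $$\bigoplus_{X\in\binom{[n]}{p},\,Y\in\binom{[n]}{q},\,X\cap Y=\emptyset} f(X)\odot g(Y)$$ can be computed by an arithmetic circuit over $\oplus,\odot$ with $O((n^p+n^q)\log n)$ gates, where the constant in the $O$-notation does not depend on $n,p,q$.
   Context: $\binom{[n]}{p}$ denotes the family of $p$-element subsets of $[n]=\{1,\dots,n\}$. An arithmetic circuit has input gates for the values $f(X)$ and $g(Y)$ and binary gates each computing $\oplus$ or $\odot$ (with left/right order of the $\odot$ arguments specified) of its two predecessors. *)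

(* Defs.v *)
From HB Require Import structures.
From mathcomp Require Import all_boot all_order all_algebra.
Set Implicit Arguments. Unset Strict Implicit. Unset Printing Implicit Defensive.
Import GRing.Theory.
Local Open Scope ring_scope.

Definition ksub (n k : nat) := {X : {set 'I_n} | #|X| == k}.

(* A circuit is a
   sequence of gates; gate number k is either an input gate reading f(X)
   (X a p-subset) or g(Y) (Y a q-subset), or a binary gate
   Add i j (= v_i (+) v_j) / Mul i j (= v_i (.) v_j, in this order)
   whose predecessors i, j are earlier gates (i, j < k). *)
Inductive gate (n p q : nat) :=
| InF of ksub n p
| InG of ksub n q
| AddG of nat & nat
| MulG of nat & nat.

Definition circuit n p q := seq (gate n p q).

Definition wf_gate n p q (k : nat) (G : gate n p q) : bool :=
  match G with
  | AddG i j | MulG i j => ((i < k) && (j < k))%N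
  | _ => true
  end.

Definition wf_circuit n p q (c : circuit n p q) : bool :=
  all (fun kg => wf_gate kg.1 kg.2) (zip (iota 0 (size c)) c).

Section Eval.
Variables (S : pzSemiRingType) (n p q : nat).
Variables (f : ksub n p -> S) (g : ksub n q -> S).

Definition gate_val (vs : seq S) (G : gate n p q) : S :=
  match G with
  | InF X => f X
  | InG Y => g Y
  | AddG i j => nth 0 vs i + nth 0 vs j
  | MulG i j => nth 0 vs i * nth 0 vs j
  end.

Definition circuit_vals (c : circuit n p q) : seq S :=
  foldl (fun vs G => rcons vs (gate_val vs G)) [::] c.

Definition circuit_out (c : circuit n p q) : S := last 0 (circuit_vals c).

Definition disjoint_prod_sum : S :=
  \sum_(X : ksub n p) \sum_(Y : ksub n q | [disjoint val X & val Y]) f X * g Y.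
End Eval.

(* Main.v *)
Require Import Defs.
From HB Require Import structures.
From mathcomp Require Import all_boot all_order all_algebra.
From mathcomp Require Import zify ring.
Set Implicit Arguments. Unset Strict Implicit. Unset Printing Implicit Defensive.
Import GRing.Theory.

Section Circ.
Variables (n p q : nat).
Notation gateT := (gate n p q).
Notation circ := (circuit n p q).

Lemma wf_rcons (c : circ) G :
  wf_circuit (rcons c G) = wf_circuit c && wf_gate (size c) G.
Proof.
rewrite /wf_circuit size_rcons -addn1 iotaD add0n /= -cats1.
rewrite zip_cat ?size_iota // all_cat /=. by rewrite andbT.
Qed.

Lemma wf_nil : wf_circuit ([::] : circ). Proof. by []. Qed.

Section Sem.
Variables (S : pzSemiRingType) (f : ksub n p -> S) (g : ksub n q -> S).
Local Open Scope ring_scope.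

Definition vals (c : circ) := circuit_vals f g c.

Lemma vals_rcons c G : vals (rcons c G) = rcons (vals c) (gate_val f g (vals c) G).
Proof. by rewrite /vals /circuit_vals foldl_rcons. Qed.

Lemma size_vals c : size (vals c) = size c.
Proof.
elim/last_ind: c => [//|c G IH]; by rewrite vals_rcons !size_rcons IH.
Qed.

Lemma vals_cat c e i : (i < size c)%N -> nth 0 (vals (c ++ e)) i = nth 0 (vals c) i.
Proof.
move=> hi; elim/last_ind: e => [|e G IH]; first by rewrite cats0.
rewrite -rcons_cat vals_rcons nth_rcons size_vals size_cat.
by rewrite (leq_trans hi (leq_addr _ _)) IH.
Qed.

Lemma vals_last c G : nth 0 (vals (rcons c G)) (size c) = gate_val f g (vals c) G.
Proof. by rewrite vals_rcons nth_rcons size_vals ltnn eqxx. Qed.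

Definition cinv (c : circ) (o : option nat) (v : S) (b : bool) :=
  match o with
  | None => v = 0 /\ ~~ b
  | Some i => (i < size c)%N /\ nth 0 (vals c) i = v
  end.

Lemma cinv_cat c e o v b : cinv c o v b -> cinv (c ++ e) o v b.
Proof.
case: o => [i [hi hv]|//]; split; first by rewrite size_cat (leq_trans hi (leq_addr _ _)).
by rewrite vals_cat.
Qed.

End Sem.
End Circ.

Section Sum.
Variables (n p q : nat).
Notation circ := (circuit n p q).

Fixpoint sumchain (c : circ) (a : nat) (l : seq nat) : circ * nat :=
  match l with
  | [::] => (c, a)
  | j :: l' => sumchain (rcons c (AddG n p q a j)) (size c) l'
  end.

Definition sumloc (c : circ) (l : seq (option nat)) : circ * option nat :=
  match pmap id l with
  | [::] => (c, None)
  | i :: r => ((sumchain c i r).1, Some (sumchain c i r).2)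
  end.

Variables (S : pzSemiRingType) (f : ksub n p -> S) (g : ksub n q -> S).
Local Open Scope ring_scope.

Lemma sumchain_spec c a l :
  wf_circuit c -> (a < size c)%N -> all (fun j => j < size c)%N l ->
  let cr := sumchain c a l in
  [/\ wf_circuit cr.1 /\ (exists e, cr.1 = c ++ e), size cr.1 = (size c + size l)%N,
      (cr.2 < size cr.1)%N,
      nth 0 (vals f g cr.1) cr.2 = nth 0 (vals f g c) a + \sum_(j <- l) nth 0 (vals f g c) j
    & (l != [::]) -> cr.2 = (size cr.1).-1].
Proof.
elim: l c a => [|j l IH] c a wfc ha hl /=.
  split=> //; [by split=> //; exists [::]; rewrite cats0|by rewrite addn0|by rewrite big_nil addr0].
move/andP: hl => [hj hl].
set c1 := rcons c _.
have wf1 : wf_circuit c1 by rewrite wf_rcons wfc /= ha hj.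
have hs1 : size c1 = (size c).+1 by rewrite size_rcons.
have ha1 : (size c < size c1)%N by rewrite hs1.
have hl1 : all (fun j => j < size c1)%N l.
  by apply/allP=> x hx; rewrite hs1 ltnS ltnW //; move/allP: hl; apply.
have [[w1 [e he]] hs ha' hv hlast] := IH c1 (size c) wf1 ha1 hl1.
split=> //.
- split=> //; by exists (rcons [::] (AddG n p q a j) ++ e); rewrite he /c1 -cats1 catA.
- by rewrite hs hs1 /= addSnnS.
- rewrite hv /c1 vals_last /= big_cons addrA; congr (_ + _).
  rewrite !big_seq; apply: eq_bigr=> x hx.
  by rewrite -cats1 vals_cat //; move/allP: hl; apply.
- move=> _; move: hlast; case: (l =P [::]) => [El _|/eqP ne]; last by apply.
  by rewrite El /= size_rcons.
Qed.

Lemma sum_pmap (T : eqType) (xs : seq T) (lo : T -> option nat) (vo : T -> S) (no : T -> bool) (c : circ) :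
  (forall x, x \in xs -> cinv f g c (lo x) (vo x) (no x)) ->
  [/\ \sum_(x <- xs) vo x = \sum_(i <- pmap id (map lo xs)) nth 0 (vals f g c) i,
      all (fun j => j < size c)%N (pmap id (map lo xs)) &
      has no xs -> pmap id (map lo xs) != [::]].
Proof.
elim: xs => [|x xs IH] hinv /=; first by rewrite !big_nil.
have [s1 s2 s3] : [/\ \sum_(x <- xs) vo x = \sum_(i <- pmap id (map lo xs)) nth 0 (vals f g c) i,
      all (fun j => j < size c)%N (pmap id (map lo xs)) &
      has no xs -> pmap id (map lo xs) != [::]].
  by apply: IH => y hy; apply: hinv; rewrite inE hy orbT.
have := hinv x (mem_head _ _); rewrite big_cons.
case: (lo x) => [i [hi hv]|[-> hn]] /=.
  by rewrite big_cons hv s1 hi s2.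
by rewrite add0r s1 s2 (negbTE hn).
Qed.

Lemma sumloc_spec (T : eqType) (xs : seq T) (lo : T -> option nat) (vo : T -> S) (no : T -> bool) (c : circ) :
  wf_circuit c ->
  (forall x, x \in xs -> cinv f g c (lo x) (vo x) (no x)) ->
  let cr := sumloc c (map lo xs) in
  [/\ wf_circuit cr.1, exists e, cr.1 = c ++ e, (size cr.1 <= size c + size xs)%N
    & cinv f g cr.1 cr.2 (\sum_(x <- xs) vo x) (has no xs)].
Proof.
move=> wfc hinv; have [s1 s2 s3] := sum_pmap hinv.
rewrite /sumloc; move: s1 s2 s3.
have hsz : (size (pmap id (map lo xs)) <= size xs)%N.
  by rewrite -(size_map lo xs); rewrite size_pmap count_size.
case: (pmap id (map lo xs)) hsz => [|i r] hsz s1 s2 s3 /=.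
  split=> //; first by exists [::]; rewrite cats0.
    by rewrite leq_addr.
  by rewrite s1 big_nil; split=> //; apply/negP=> /s3.
move/andP: s2 => [hi hr].
have [[w1 [e he]] hs ha' hv _] := sumchain_spec wfc hi hr.
split=> //; first by exists e.
  by rewrite hs leq_add2l; exact: ltnW.
by split=> //; rewrite hv s1 big_cons.
Qed.

End Sum.

Section Layer.
Variables (n p q : nat).
Notation circ := (circuit n p q).

Fixpoint layer (K : eqType) (c : circ) (ks : seq K) (srcl : K -> seq (option nat))
  : circ * (K -> option nat) :=
  match ks with
  | [::] => (c, fun _ => None)
  | k :: ks' => let r := sumloc c (srcl k) in
                let r2 := layer r.1 ks' srcl in
                (r2.1, fun k' => if k' == k then r.2 else r2.2 k')
  end.

Fixpoint inputs (A : eqType) (c : circ) (xs : seq A) (mk : A -> gate n p q)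
  : circ * (A -> option nat) :=
  match xs with
  | [::] => (c, fun _ => None)
  | x :: xs' => let r2 := inputs (rcons c (mk x)) xs' mk in
                (r2.1, fun x' => if x' == x then Some (size c) else r2.2 x')
  end.

Fixpoint fin (A : Type) (c : circ) (acc : nat) (ys : seq A) (hl gl : A -> nat) : circ :=
  match ys with
  | [::] => c
  | y :: ys' => let c1 := rcons c (MulG n p q (hl y) (gl y)) in
                fin (rcons c1 (AddG n p q acc (size c))) (size c1) ys' hl gl
  end.

Variables (S : pzSemiRingType) (f : ksub n p -> S) (g : ksub n q -> S).
Local Open Scope ring_scope.

Lemma layer_spec (K K0 : eqType) (ks : seq K) (srcs : K -> seq K0) (F0 : K0 -> option nat)
   (v0 : K0 -> S) (ne0 : K0 -> bool) (c : circ) :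
  wf_circuit c ->
  (forall k s, k \in ks -> s \in srcs k -> cinv f g c (F0 s) (v0 s) (ne0 s)) ->
  let r := layer c ks (fun k => map F0 (srcs k)) in
  [/\ wf_circuit r.1, exists e, r.1 = c ++ e,
      (size r.1 <= size c + \sum_(k <- ks) size (srcs k))%N
    & forall k, k \in ks -> cinv f g r.1 (r.2 k) (\sum_(s <- srcs k) v0 s) (has ne0 (srcs k))].
Proof.
elim: ks c => [|k ks IH] c wfc hin /=.
  by split=> //; [exists [::]; rewrite cats0 | rewrite big_nil addn0].
have [w1 [e1 he1] hs1 hi1] := sumloc_spec wfc (hin k ^~ (mem_head _ _)).
have hin' : forall k' s, k' \in ks -> s \in srcs k' ->
   cinv f g (sumloc c [seq F0 i | i <- srcs k]).1 (F0 s) (v0 s) (ne0 s).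
  by move=> k' s hk hs; rewrite he1; apply: cinv_cat; apply: hin hs; rewrite inE hk orbT.
have [w2 [e2 he2] hs2 hi2] := IH _ w1 hin'.
split=> //.
- by exists (e1 ++ e2); rewrite he2 he1 catA.
- rewrite big_cons (leq_trans hs2) // addnA leq_add2r (leq_trans hs1) //.
- move=> k'; rewrite inE; case: eqP => [->|_] /= hk.
    by rewrite he2; apply: cinv_cat.
  exact: hi2.
Qed.

Lemma inputs_spec (A : eqType) (xs : seq A) (mk : A -> gate n p q) (vf : A -> S) (c : circ) :
  wf_circuit c -> (forall x k, wf_gate k (mk x)) ->
  (forall vs x, gate_val f g vs (mk x) = vf x) ->
  let r := inputs c xs mk in
  [/\ wf_circuit r.1, exists e, r.1 = c ++ e, size r.1 = (size c + size xs)%N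
    & forall x, x \in xs -> cinv f g r.1 (r.2 x) (vf x) true].
Proof.
move=> + hwf hv; elim: xs c => [|x xs IH] c wfc /=.
  by split=> //; [exists [::]; rewrite cats0 | rewrite addn0].
have w1 : wf_circuit (rcons c (mk x)) by rewrite wf_rcons wfc hwf.
have [w2 [e2 he2] hs2 hi2] := IH _ w1.
split=> //.
- by exists (rcons [::] (mk x) ++ e2); rewrite he2 -cats1 catA.
- by rewrite hs2 size_rcons addSnnS.
- move=> x'; rewrite inE; case: eqP => [->|_] /= hk; last exact: hi2.
  rewrite he2; split; first by rewrite size_cat size_rcons (leq_trans (ltnSn _)) // leq_addr.
  by rewrite vals_cat ?size_rcons // vals_last hv.
Qed.

Lemma fin_spec (A : eqType) (ys : seq A) (hl gl : A -> nat) (h : A -> S) (g' : A -> S) (c : circ) acc :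
  wf_circuit c -> acc = (size c).-1 -> (0 < size c)%N ->
  (forall y, y \in ys -> (hl y < size c)%N /\ (gl y < size c)%N /\
       nth 0 (vals f g c) (hl y) = h y /\ nth 0 (vals f g c) (gl y) = g' y) ->
  let c' := fin c acc ys hl gl in
  [/\ wf_circuit c', (size c' = size c + 2 * size ys)%N, (0 < size c')%N &
     last 0 (vals f g c') = nth 0 (vals f g c) acc + \sum_(y <- ys) h y * g' y].
Proof.
elim: ys c acc => [|y ys IH] c acc wfc hacc hc hy /=.
  split=> //; first by rewrite muln0 addn0.
  by rewrite big_nil addr0 -nth_last size_vals hacc.
have [hh [hg [vh vg]]] := hy y (mem_head _ _).
set c1 := rcons c _; set c2 := rcons c1 _.
have hs1 : size c1 = (size c).+1 by rewrite size_rcons.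
have w2 : wf_circuit c2.
  rewrite /c2 wf_rcons /c1 wf_rcons wfc /= hh hg /= hs1 ltnSn andbT.
  by rewrite hacc prednK // ltnW.
have hs2 : size c2 = (size c).+2 by rewrite size_rcons hs1.
have hy2 : forall y0, y0 \in ys -> (hl y0 < size c2)%N /\ (gl y0 < size c2)%N /\
       nth 0 (vals f g c2) (hl y0) = h y0 /\ nth 0 (vals f g c2) (gl y0) = g' y0.
  move=> y0 hy0; have [a1 [a2 [a3 a4]]] : (hl y0 < size c)%N /\ (gl y0 < size c)%N /\
       nth 0 (vals f g c) (hl y0) = h y0 /\ nth 0 (vals f g c) (gl y0) = g' y0.
    by apply: hy; rewrite inE hy0 orbT.
  have E : c2 = c ++ [:: MulG n p q (hl y) (gl y); AddG n p q acc (size c)].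
    by rewrite /c2 /c1 -!cats1 -catA.
  rewrite E !vals_cat // a3 a4 size_cat /=.
  by split; [rewrite (leq_trans a1) // leq_addr|split; [rewrite (leq_trans a2) // leq_addr|]].
have [w3 hs3 hc3 hl3] : [/\ wf_circuit (fin c2 (size c1) ys hl gl),
   (size (fin c2 (size c1) ys hl gl) = size c2 + 2 * size ys)%N,
   (0 < size (fin c2 (size c1) ys hl gl))%N &
   last 0 (vals f g (fin c2 (size c1) ys hl gl)) = nth 0 (vals f g c2) (size c1) + \sum_(y <- ys) h y * g' y].
  by apply: IH => //; rewrite hs2.
split=> //; first by rewrite hs3 hs2 mulnS !addnS.
rewrite hl3 big_cons addrA; congr (_ + _).
rewrite /c2 vals_last /= /c1 vals_last /= -cats1 vals_cat; first by rewrite vh vg.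
by rewrite hacc prednK.
Qed.

End Layer.

Section Alg.
Variables (n p q : nat).

Definition dd := (trunc_log 2 n).+1.
Definition sz l := (2 ^ (dd - l))%N.
Definition node l (x : 'I_n) : 'I_n := Ordinal (leq_ltn_trans (leq_div x (sz l)) (ltn_ord x)).
Definition LL l (B : {set 'I_n}) : {set 'I_n} := [set x | node l x \in B].
Definition halve (b : 'I_n) : 'I_n := Ordinal (leq_ltn_trans (leq_div b 2) (ltn_ord b)).
Definition par (B : {set 'I_n}) := halve @: B.
Definition Tl l := [set b : 'I_n | (b < 2 ^ l)%N].
Definition Key := ({set 'I_n} * {set 'I_n})%type.
Definition valid l (k : Key) :=
  [&& k.1 \subset Tl l, (#|k.1| <= q)%N, k.2 \subset LL l k.1 & (#|k.2| <= p)%N].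
Definition keys l := enum [pred k : Key | valid l k].
Definition RR l (k : Key) (X : ksub n p) := val X :&: LL l k.1 == k.2.
Definition srcs0 (k : Key) := [seq X <- enum {: ksub n p} | RR 0 k X].
Definition srcsS l (k' : Key) :=
  [seq k <- keys l | (k.1 == par k'.1) && (k.2 :&: LL l.+1 k'.1 == k'.2)].

Definition base := inputs ([::] : circuit n p q) (enum {: ksub n p}) (fun X => InF q X).

Fixpoint build (l : nat) : circuit n p q * (Key -> option nat) :=
  match l with
  | 0 => layer base.1 (keys 0) (fun k => map base.2 (srcs0 k))
  | l'.+1 => let r := build l' in layer r.1 (keys l) (fun k => map r.2 (srcsS l' k))
  end.

Definition gin := inputs (build dd).1 (enum {: ksub n q}) (fun Y => InG p Y).
Definition hl (Y : ksub n q) := odflt 0%N ((build dd).2 (val Y, set0)).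
Definition gl (Y : ksub n q) := odflt 0%N (gin.2 Y).
Definition final : circuit n p q :=
  match enum {: ksub n q} with
  | [::] => gin.1
  | y0 :: ys => fin (rcons gin.1 (MulG n p q (hl y0) (gl y0))) (size gin.1) ys hl gl
  end.

Lemma node_halve l x : (l < dd)%N -> node l x = halve (node l.+1 x).
Proof.
move=> hl; apply: val_inj => /=; rewrite /sz -divnMA -expnSr; congr (_ %/ 2 ^ _).
by rewrite subnSK.
Qed.

Lemma LL_par l B : (l < dd)%N -> LL l.+1 B \subset LL l (par B).
Proof.
move=> hl; apply/subsetP=> x; rewrite !inE => hx.
by rewrite node_halve // imset_f.
Qed.

Lemma node_dd x : node dd x = x.
Proof. by apply: val_inj; rewrite /= /sz subnn expn0 divn1. Qed.

Lemma LL_dd B : LL dd B = B.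
Proof. by apply/setP=> x; rewrite inE node_dd. Qed.

Lemma par_valid l (B : {set 'I_n}) : B \subset Tl l.+1 -> par B \subset Tl l.
Proof.
move/subsetP=> hB; apply/subsetP=> y /imsetP [x hx ->]; move: (hB x hx).
by rewrite !inE /= ltn_divLR // expnSr.
Qed.

End Alg.

Section Pull.
Variables (n p : nat) (S : pzSemiRingType) (f : ksub n p -> S).
Local Open Scope ring_scope.

Lemma pull_ok (K0 : eqType) (ss : seq K0) (R0 : K0 -> ksub n p -> bool)
   (R : ksub n p -> bool) (s0 : ksub n p -> K0) :
  uniq ss -> (forall X, R X -> s0 X \in ss /\ R0 (s0 X) X) ->
  (forall X s, s \in ss -> R0 s X -> s = s0 X /\ R X) ->
  \sum_(s <- ss) \sum_(X | R0 s X) f X = \sum_(X | R X) f X /\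
  has (fun s => [exists X, R0 s X]) ss = [exists X, R X].
Proof.
move=> uss h1 h2; split.
  rewrite (exchange_big_dep predT) //= [RHS]big_mkcond /=; apply: eq_bigr => X _.
  rewrite -big_filter.
  case hR: (R X).
    have [i1 i2] := h1 X hR.
    rewrite (@eq_in_filter _ _ (pred1 (s0 X))) ?filter_pred1_uniq ?big_seq1 //.
    move=> s hs /=; apply/idP/eqP => [hs'|->//]; by case: (h2 X s hs hs').
  rewrite (@eq_in_filter _ _ pred0) ?filter_pred0 ?big_nil //.
  by move=> s hs /=; apply/negP => hs'; case: (h2 X s hs hs'); rewrite hR.
apply/hasP/existsP => [[s hs /existsP [X hX]]|[X hX]].
  by exists X; case: (h2 X s hs hX).
by have [i1 i2] := h1 X hX; exists (s0 X) => //; apply/existsP; exists X.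
Qed.

End Pull.

Section Build.
Variables (n p q : nat).
Variables (S : pzSemiRingType) (f : ksub n p -> S) (g : ksub n q -> S).
Local Open Scope ring_scope.

Definition cost0 := (\sum_(k <- keys n p q 0) size (srcs0 p k))%N.
Definition costS l := (\sum_(k <- keys n p q l.+1) size (srcsS p q l k))%N.

Lemma mem_keys l k : (k \in keys n p q l) = valid p q l k.
Proof. by rewrite mem_enum. Qed.

Lemma cardK (X : ksub n p) : #|val X| = p.
Proof. by apply/eqP; case: X. Qed.

Lemma build_spec l : (l <= dd n)%N ->
  let r := build n p q l in
  [/\ wf_circuit r.1,
      (size r.1 <= #|{: ksub n p}| + cost0 + \sum_(i < l) costS i)%N
    & forall k, k \in keys n p q l ->
      cinv f g r.1 (r.2 k) (\sum_(X : ksub n p | RR l k X) f X) [exists X : ksub n p, RR l k X]].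
Proof.
elim: l => [|l IH] hl /=.
  have [w0 _ hs0 hi0] := @inputs_spec n p q S f g _ (enum {: ksub n p}) (fun X => InF q X) f _
     (wf_nil n p q) (fun _ _ => erefl) (fun _ _ => erefl).
  have hall : forall s : ksub n p, s \in enum {: ksub n p} by move=> s; rewrite mem_enum.
  have [w1 _ hs1 hi1] := @layer_spec n p q S f g _ _ (keys n p q 0) (srcs0 p) (base n p q).2 f (fun _ => true) _ w0
    (fun k s _ hs => hi0 s (hall s)).
  split=> //.
    rewrite big_ord0 addn0 (leq_trans hs1) // /base hs0 /= -cardE.
    by rewrite /cost0.
  move=> k hk; have := hi1 k hk.
  rewrite /srcs0 big_filter big_enum_cond /=.
  have -> : has (fun _ => true) [seq X <- enum {: ksub n p} | RR 0 k X] = [exists X : ksub n p, RR 0 k X].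
    apply/hasP/existsP => [[X hX _]|[X hX]]; first by exists X; move: hX; rewrite mem_filter => /andP[].
    by exists X => //; rewrite mem_filter hX mem_enum.
  by [].
have hl' : (l < dd n)%N by [].
have [w1 hs1 hi1] := IH (ltnW hl').
set r := build n p q l.
have hmem : forall k s, s \in srcsS p q l k -> s \in keys n p q l.
  by move=> k s; rewrite mem_filter => /andP[].
have [w2 _ hs2 hi2] := @layer_spec n p q S f g _ _ (keys n p q l.+1) (srcsS p q l) r.2
   (fun k => \sum_(X : ksub n p | RR l k X) f X) (fun k => [exists X : ksub n p, RR l k X]) _ w1
   (fun k s _ hs => hi1 s (hmem k s hs)).
split=> //.
  by rewrite (leq_trans hs2) // big_ord_recr /= addnA leq_add2r.
move=> k' hk'; have := hi2 k' hk'.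
have := hk'; rewrite mem_keys /valid => /and4P [v1 v2 v3 v4].
have hsub := LL_par k'.1 hl'.
set s0 := fun X : ksub n p => (par k'.1, val X :&: LL l (par k'.1)).
have u1 : uniq (srcsS p q l k') by rewrite filter_uniq // enum_uniq.
have u2 : forall X, RR l.+1 k' X -> s0 X \in srcsS p q l k' /\ RR l (s0 X) X.
  move=> X hX; split; last by rewrite /RR /s0 /= eqxx.
  have hX' : val X :&: LL l.+1 k'.1 == k'.2 := hX.
  rewrite mem_filter /s0 /= eqxx /= -setIA (setIidPr hsub) hX' mem_keys /valid /=.
  rewrite par_valid //= (leq_trans (leq_imset_card _ _)) //= subsetIr /=.
  by rewrite (leq_trans (subset_leq_card (subsetIl _ _))) // cardK.
have u3 : forall X s, s \in srcsS p q l k' -> RR l s X -> s = s0 X /\ RR l.+1 k' X.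
  move=> X s; rewrite mem_filter => /andP [/andP [/eqP e1 /eqP e2] _] /eqP hR.
  split; first by move: e1 e2 hR; case: s => B Z /= -> _ <-.
  by rewrite /RR -e2 -hR e1 -setIA (setIidPr hsub).
have [-> ->] := @pull_ok n p S f _ (srcsS p q l k') (RR l) (RR l.+1 k') s0 u1 u2 u3.
by [].
Qed.

End Build.

Lemma exists_sub (T : finType) (A : {set T}) k : (k <= #|A|)%N ->
  exists X : {set T}, X \subset A /\ #|X| = k.
Proof.
move=> hk; exists [set x in take k (enum A)]; split.
  by apply/subsetP=> x; rewrite inE => /mem_take; rewrite mem_enum.
rewrite cardsE; have /card_uniqP -> : uniq (take k (enum A)).
  by apply: take_uniq; apply: enum_uniq.
by rewrite size_take -cardE; case: ltnP => // h; apply/eqP; rewrite eqn_leq hk h.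
Qed.

Section Final.
Variables (n p q : nat) (hq : (0 < q)%N) (hpq : (p + q <= n)%N).
Variables (S : pzSemiRingType) (f : ksub n p -> S) (g : ksub n q -> S).
Local Open Scope ring_scope.

Lemma ex_Y : exists Y : ksub n q, True.
Proof.
have hc : (q <= #|[set: 'I_n]|)%N by rewrite cardsT card_ord (leq_trans _ hpq) // leq_addl.
have [Y [_ hY]] := exists_sub hc.
by exists (exist _ Y (introT eqP hY)).
Qed.

Lemma ex_X (Y : ksub n q) : [exists X : ksub n p, RR (dd n) (val Y, set0) X].
Proof.
have hc : (p <= #|~: val Y|)%N.
  have := cardsC (val Y); rewrite card_ord cardK => hc.
  by rewrite -(leq_add2l q) hc addnC.
have [X [hX1 hX2]] := exists_sub hc.
apply/existsP; exists (exist _ X (introT eqP hX2)).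
rewrite /RR /= LL_dd; apply/eqP; apply/setP=> x; rewrite !inE.
by apply/negP=> /andP[/(subsetP hX1)]; rewrite inE => /negP.
Qed.

End Final.

Section Final2.
Variables (n p q : nat) (hq : (0 < q)%N) (hpq : (p + q <= n)%N).
Variables (S : pzSemiRingType) (f : ksub n p -> S) (g : ksub n q -> S).
Local Open Scope ring_scope.

Definition hv (Y : ksub n q) := \sum_(X : ksub n p | RR (dd n) (val Y, set0) X) f X.

Lemma final_spec :
  [/\ wf_circuit (final n p q), (0 < size (final n p q))%N,
      (size (final n p q) <= #|{: ksub n p}| + cost0 n p q + \sum_(i < dd n) costS n p q i
           + 3 * #|{: ksub n q}|)%N
    & circuit_out f g (final n p q) = disjoint_prod_sum f g].
Proof.
have [wB hsB hiB] := build_spec f g (leqnn (dd n)).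
have hall : forall s : ksub n q, s \in enum {: ksub n q} by move=> s; rewrite mem_enum.
have [wG [e he] hsG hiG] := @inputs_spec n p q S f g _ (enum {: ksub n q}) (fun Y => InG p Y) g
   (build n p q (dd n)).1 wB (fun _ _ => erefl) (fun _ _ => erefl).
have hH : forall Y : ksub n q, (hl p Y < size (gin n p q).1)%N /\ nth 0 (vals f g (gin n p q).1) (hl p Y) = hv Y.
  move=> Y; have hk : (val Y, set0) \in keys n p q (dd n).
    rewrite mem_keys /valid /= cardK leqnn sub0set cards0 /= andbT.
    apply/subsetP=> x _; rewrite inE (leq_trans (ltn_ord x)) //.
    by rewrite ltnW // trunc_log_ltn.
  have := hiB _ hk; rewrite (ex_X hpq) /hl.
  case: ((build n p q (dd n)).2 (val Y, set0)) => [i|[_ //]] /= [h1 h2].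
  rewrite /gin he size_cat vals_cat // h2; split=> //; exact: leq_trans h1 (leq_addr _ _).
have hG : forall Y : ksub n q, (gl p Y < size (gin n p q).1)%N /\ nth 0 (vals f g (gin n p q).1) (gl p Y) = g Y.
  move=> Y; have := hiG Y (hall Y); rewrite /gl.
  by case: ((gin n p q).2 Y) => [i|[_ //]].
have hsum : disjoint_prod_sum f g = \sum_(Y <- enum {: ksub n q}) hv Y * g Y.
  rewrite /disjoint_prod_sum (exchange_big_dep predT) //= big_enum /=.
  apply: eq_bigr => Y _; rewrite /hv mulr_suml; apply: eq_bigl => X.
  by rewrite /RR /= LL_dd setI_eq0.
rewrite hsum /final; move: hall; case E: (enum {: ksub n q}) => [|y0 ys] hall'.
  by have [Y _] := ex_Y hpq; move: (hall' Y).
set c1 := rcons (gin n p q).1 _.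
have hs1 : size c1 = (size (gin n p q).1).+1 by rewrite size_rcons.
have wc1 : wf_circuit c1 by rewrite wf_rcons wG /= (proj1 (hH y0)) (proj1 (hG y0)).
have hy : forall y, y \in ys -> (hl p y < size c1)%N /\ (gl p y < size c1)%N /\
       nth 0 (vals f g c1) (hl p y) = hv y /\ nth 0 (vals f g c1) (gl p y) = g y.
  move=> y _; have [a1 a2] := hH y; have [a3 a4] := hG y.
  rewrite /c1 -cats1 !vals_cat // a2 a4 size_cat /= addn1.
  by split; [exact: ltnW|split; [exact: ltnW|]].
have e1 : size (gin n p q).1 = (size c1).-1 by rewrite hs1.
have e2 : (0 < size c1)%N by rewrite hs1.
have [w3 hs3 hc3 hl3] := @fin_spec n p q S f g _ ys (@hl n p q) (@gl n p q) hv g c1 (size (gin n p q).1)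
   wc1 e1 e2 hy.
split=> //.
  have hsz : #|{: ksub n q}| = (size ys).+1 by rewrite cardE E.
  rewrite hs3 hs1 hsG -cardE hsz; move: hsB; clear; move: (size _) (_ + _)%N (size ys) => a A s; lia.
rewrite /circuit_out -/(vals f g _) hl3 big_cons; congr (_ + _).
by rewrite /c1 vals_last /= (proj2 (hH y0)) (proj2 (hG y0)).
Qed.

End Final2.

Lemma expn_mono a b e : a <= b -> a ^ e <= b ^ e.
Proof. by case: e => [//|e] h; rewrite leq_exp2r. Qed.

Lemma ffact_le_exp n m : n ^_ m <= n ^ m.
Proof.
elim: m n => [|m IH] n; first by rewrite ffactn0 expn0.
by rewrite ffactnS expnS leq_mul // (leq_trans (IH _)) // expn_mono // leq_pred.
Qed.

Lemma binf_le n m : 'C(n, m) * m`! <= n ^ m.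
Proof. by rewrite bin_ffact ffact_le_exp. Qed.

Lemma pow_le_ffact k j : k ^ j <= (k + j) ^_ j.
Proof.
elim: j => [|j IH]; first by rewrite ffactn0 expn0.
by rewrite addnS ffactSS expnS leq_mul // ltnW // ltnS leq_addr.
Qed.

Lemma bin_le_pow2 N j : 'C(N, j) <= 2 ^ N.
Proof.
case: (leqP j N) => h; last by rewrite bin_small.
have := expnDn 1 1 N; rewrite addn1 => ->.
rewrite (bigD1 (Ordinal (h : j < N.+1))) //= !exp1n !muln1 leq_addr //.
Qed.

Lemma kj_bound k j : k ^ j <= 2 ^ (k + j) * j`!.
Proof.
by rewrite (leq_trans (pow_le_ffact _ _)) // -bin_ffact leq_mul2r bin_le_pow2 orbT.
Qed.

Definition KK := 128 ^ 128.

Lemma fact_bound m : 128 ^ m <= KK * m`!.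
Proof.
elim: m => [|m IH]; first by rewrite expn0 fact0 muln1 expn_gt0.
case: (leqP m.+1 128) => h.
  by rewrite (leq_trans (leq_pexp2l _ h)) // leq_pmulr // fact_gt0.
by rewrite expnS factS mulnCA leq_mul // ltnW.
Qed.
Global Opaque KK.


Lemma pow4 k j : j <= k -> 2 ^ (k + j) <= 4 ^ k.
Proof.
move=> h; rewrite (_ : 4 = 2 ^ 2) // -expnM leq_exp2l // mul2n -addnn leq_add2l //.
Qed.

Lemma main_bound n t s M k j : t * s <= 2 * n -> 0 < s -> M <= n -> M <= k * s ->
  'C(t, k) * 4 ^ k * 'C(M, j) * 2 ^ k * 2 ^ j <= KK * n ^ (maxn k j).
Proof.
move=> hts hs hMn hMk.
have hA : 'C(t, k) * 'C(M, j) * (k`! * j`!) <= t ^ k * M ^ j.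
  by rewrite mulnACA leq_mul // binf_le.
have ht : t <= 2 * n by rewrite (leq_trans _ hts) // leq_pmulr.
have E1 : 'C(t, k) * 4 ^ k * 'C(M, j) * 2 ^ k * 2 ^ j
   = 'C(t, k) * 'C(M, j) * 4 ^ k * 2 ^ (k + j) by rewrite expnD; ring.
rewrite E1; case: (leqP j k) => hjk.
  have h1 : t ^ k * M ^ j <= (2 * n) ^ k * (4 ^ k * j`!).
    have e : t ^ k = t ^ (k - j) * t ^ j by rewrite -expnD subnK.
    rewrite (leq_trans (leq_mul (leqnn _) (expn_mono j hMk))) // expnMn e.
    rewrite (_ : t ^ (k - j) * t ^ j * (k ^ j * s ^ j) = (t ^ (k - j) * (t * s) ^ j) * k ^ j);
      last by rewrite expnMn; ring.
    apply: leq_mul; last by rewrite (leq_trans (kj_bound _ _)) // leq_mul2r pow4 ?orbT.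
    rewrite -(subnK hjk) expnD addnK.
    by apply: leq_mul; apply: expn_mono.
  have h2 : 'C(t, k) * 'C(M, j) * k`! <= 8 ^ k * n ^ k.
    rewrite -(leq_pmul2r (fact_gt0 j)) -mulnA (leq_trans hA) // (leq_trans h1) //.
    by rewrite mulnA leq_mul2r expnMn (_ : 8 = 2 * 4) // expnMn; apply/orP; right; rewrite mulnAC.
  rewrite -(leq_pmul2r (fact_gt0 k)).
  rewrite (leq_trans (leq_mul (leq_mul (leqnn _) (pow4 hjk)) (leqnn _))) //.
  rewrite (_ : 'C(t, k) * 'C(M, j) * 4 ^ k * 4 ^ k * k`! = ('C(t, k) * 'C(M, j) * k`!) * (4 ^ k * 4 ^ k)); last by ring.
  rewrite (leq_trans (leq_mul h2 (leqnn _))) //.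
  rewrite (_ : 8 ^ k * n ^ k * (4 ^ k * 4 ^ k) = 128 ^ k * n ^ k); last first.
    by rewrite (_ : 128 = 8 * 4 * 4) // !expnMn; ring.
  by rewrite mulnAC leq_mul2r fact_bound orbT.
have hkj : k <= j by apply: ltnW.
have h1 : t ^ k * M ^ j <= (4 ^ k * k`!) * (2 ^ k * n ^ j).
  have e : M ^ j = M ^ (j - k) * M ^ k by rewrite -expnD subnK.
  rewrite e (_ : t ^ k * (M ^ (j - k) * M ^ k) = M ^ (j - k) * (t ^ k * M ^ k)); last by ring.
  rewrite (leq_trans (leq_mul (expn_mono _ hMn) (leq_mul (leqnn _) (expn_mono k hMk)))) //.
  rewrite expnMn (_ : n ^ (j - k) * (t ^ k * (k ^ k * s ^ k)) = k ^ k * ((t * s) ^ k * n ^ (j - k)));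
    last by rewrite expnMn; ring.
  rewrite (_ : 4 ^ k * k`! * (2 ^ k * n ^ j) = (4 ^ k * k`!) * ((2 * n) ^ k * n ^ (j - k)));
    last by rewrite expnMn -(subnK hkj) expnD addnK; ring.
  apply: leq_mul; first by rewrite (leq_trans (kj_bound _ _)) // leq_mul2r pow4 ?orbT.
  by rewrite leq_mul2r expn_mono ?orbT.
have h2 : 'C(t, k) * 'C(M, j) * j`! <= 8 ^ j * n ^ j.
  rewrite -(leq_pmul2r (fact_gt0 k)) (_ : 'C(t, k) * 'C(M, j) * j`! * k`! = 'C(t, k) * 'C(M, j) * (k`! * j`!)); last by ring.
  rewrite (leq_trans hA) // (leq_trans h1) //.
  rewrite (_ : 4 ^ k * k`! * (2 ^ k * n ^ j) = (8 ^ k * n ^ j) * k`!); last first.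
    by rewrite (_ : 8 = 4 * 2) // expnMn; ring.
  by rewrite leq_mul2r [X in _ || X]leq_mul2r leq_exp2l // hkj !orbT.
rewrite -(leq_pmul2r (fact_gt0 j)).
have h3 : 4 ^ k * 2 ^ (k + j) <= 4 ^ j * 4 ^ j.
  apply: leq_mul; first by rewrite leq_exp2l.
  by rewrite addnC pow4.
rewrite (_ : 'C(t, k) * 'C(M, j) * 4 ^ k * 2 ^ (k + j) * j`! = ('C(t, k) * 'C(M, j) * j`!) * (4 ^ k * 2 ^ (k + j))); last by ring.
rewrite (leq_trans (leq_mul h2 h3)) //.
rewrite (_ : 8 ^ j * n ^ j * (4 ^ j * 4 ^ j) = 128 ^ j * n ^ j); last first.
  by rewrite (_ : 128 = 8 * 4 * 4) // !expnMn; ring.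
by rewrite mulnAC leq_mul2r fact_bound orbT.
Qed.

Lemma geo_sum (y : nat -> nat) A b : (forall j, j < b -> y j * 2 ^ j <= A) ->
  \sum_(j < b) y j <= 2 * A.
Proof.
move=> hy.
have claim : (\sum_(j < b) y j) * 2 ^ b + 2 * A <= 2 * A * 2 ^ b.
  elim: b hy => [|b IH] hy; first by rewrite big_ord0 mul0n add0n expn0 muln1.
  have IH' := IH (fun j hj => hy j (ltnW (leq_trans hj (leqnn _)))).
  rewrite big_ord_recr /= expnS.
  have := hy b (ltnSn _); move: IH'; move: (\sum_(i < b) y i) (y b) (2 ^ b) => S0 yb P.
  rewrite (_ : (S0 + yb) * (2 * P) = 2 * (S0 * P) + 2 * (yb * P)); last by ring.
  rewrite (_ : 2 * A * (2 * P) = 4 * (A * P)); last by ring.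
  rewrite (_ : 2 * A * P = 2 * (A * P)); last by ring.
  move: (S0 * P) (yb * P) (A * P) => u v w; lia.
rewrite -(leq_pmul2r (expn_gt0 2 b)) (leq_trans _ claim) //.
by rewrite mulnC leq_addr.
Qed.

Lemma dsum (x : nat -> nat -> nat) A a b :
  (forall k j, k < a -> j < b -> x k j * 2 ^ k * 2 ^ j <= A) ->
  \sum_(k < a) \sum_(j < b) x k j <= 4 * A.
Proof.
move=> hx.
have h1 : forall k, k < a -> (\sum_(j < b) x k j) * 2 ^ k <= 2 * A.
  move=> k hk; rewrite big_distrl /=.
  apply: (@geo_sum (fun j => x k j * 2 ^ k) A b) => j hj; exact: hx.
by rewrite (_ : 4 = 2 * 2) // -mulnA; apply: (@geo_sum (fun k => \sum_(j < b) x k j) (2 * A) a).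
Qed.

Lemma fiber_card n (phi : 'I_n -> 'I_n) s (B : {set 'I_n}) : 0 < s ->
  (forall x, val (phi x) = x %/ s) -> #|phi @^-1: B| <= #|B| * s.
Proof.
move=> hs hphi; rewrite -sum1_card (partition_big phi (mem B)); last by move=> x; rewrite inE.
rewrite -sum_nat_const leq_sum // => b hb.
rewrite sum1_card.
pose h (x : 'I_n) : 'I_s := Ordinal (ltn_pmod x hs).
apply: (leq_trans (@leq_card_in _ _ h _ _)); last by rewrite card_ord.
move=> x y; rewrite [x \in _]unfold_in [y \in _]unfold_in => /andP [_ /eqP hx] /andP [_ /eqP hy] /(congr1 val) /= hm.
apply: ord_inj; rewrite (divn_eq x s) (divn_eq y s) hm -!hphi hx hy //.
Qed.

Lemma card_Tl n l : #|Tl n l| <= 2 ^ l.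
Proof.
rewrite cardE -(size_map val) -(size_iota 0 (2 ^ l)).
apply: uniq_leq_size; first by rewrite (map_inj_uniq val_inj) enum_uniq.
move=> x /mapP [b]; rewrite mem_enum inE => hb ->; by rewrite mem_iota.
Qed.

Lemma card_ksub_le n p : #|{: ksub n p}| <= n ^ p.
Proof.
rewrite card_sig -cardsE card_draws card_ord.
by rewrite (leq_trans _ (binf_le n p)) // leq_pmulr // fact_gt0.
Qed.

Lemma one_le_sum (T : finType) (P : pred T) (a : nat) (F : T -> nat) (W : T -> nat) :
  (forall x, P x -> F x < a) ->
  \sum_(x | P x) W x <= \sum_(k < a) \sum_(x | P x && (F x == k)) W x.
Proof.
move=> hF; rewrite (exchange_big_dep P) /=; last by move=> i x _ /andP[].
rewrite leq_sum // => x hx.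
rewrite (bigD1 (Ordinal (hF x hx))) //= ?hx ?eqxx //= leq_addr //.
Qed.

Lemma size_filter_enum (T : finType) (P : pred T) : size [seq x <- enum T | P x] = \sum_(x | P x) 1.
Proof. by rewrite size_filter -sum1_count big_enum_cond /=. Qed.
Lemma size_filter_enumP (T : finType) (A : pred T) (P : pred T) :
  size [seq x <- enum A | P x] = \sum_(x in A | P x) 1.
Proof. by rewrite size_filter -sum1_count big_enum_cond /=. Qed.

Lemma sum_sub (T : finType) (P Q : pred T) (F : T -> nat) :
  (forall x, P x -> Q x) -> \sum_(x | P x) F x <= \sum_(x | Q x) F x.
Proof.
move=> h; rewrite (big_mkcond P) (big_mkcond Q) leq_sum // => x _.
by case hP: (P x); rewrite ?(h x hP).
Qed.

Lemma pair_split (T : finType) (P : pred T) (F : T * T -> nat) :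
  \sum_(k : T * T | P k.1) F k = \sum_(B | P B) \sum_(Z : T) F (B, Z).
Proof.
rewrite pair_big_dep /=; apply: eq_big => [[B Z]|[B Z]] //=; by rewrite andbT.
Qed.

Lemma card_powersub (T : finType) (A : {set T}) : \sum_(B : {set T} | B \subset A) 1 = 2 ^ #|A|.
Proof. by rewrite sum1_card -card_powerset /powerset cardsE. Qed.

Section Cost.
Variables (n p q : nat).

Lemma cost0_le : cost0 n p q <= 2 * #|{: ksub n p}|.
Proof.
rewrite /cost0 /keys big_enum /=.
under eq_bigr => k _ do rewrite /srcs0 size_filter_enum.
apply: (@leq_trans (\sum_(k : Key n | k.1 \subset Tl n 0) \sum_(X : ksub n p | RR 0 k X) 1)).
  by apply: sum_sub => k; rewrite inE /valid => /and4P[].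
rewrite (pair_split (fun B : {set 'I_n} => B \subset Tl n 0) (fun k => \sum_(X : ksub n p | RR 0 k X) 1)).
have E : forall B : {set 'I_n}, \sum_(Z : {set 'I_n}) \sum_(X : ksub n p | RR 0 (B, Z) X) 1 = #|{: ksub n p}|.
  move=> B; rewrite (exchange_big_dep predT) //= -sum1_card; apply: eq_bigr => X _.
  by rewrite (big_pred1 (val X :&: LL 0 B)) // => Z /=; rewrite /RR /= eq_sym.
rewrite (eq_bigr (fun _ => 1 * #|{: ksub n p}|)); last by move=> B _; rewrite mul1n; exact: E.
rewrite -big_distrl /= card_powersub leq_mul2r; apply/orP; right.
by rewrite (leq_trans (leq_pexp2l _ (card_Tl n 0))).
Qed.


Lemma sum_collapse (I J : finType) (P : pred I) (h : I -> J) :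
  \sum_(j : J) \sum_(i | P i && (h i == j)) 1 = \sum_(i | P i) 1.
Proof.
rewrite (exchange_big_dep P) /=; last by move=> j i _ /andP[].
apply: eq_bigr => i hi; rewrite (big_pred1 (h i)) // => j /=.
by rewrite hi eq_sym.
Qed.

Lemma hc_le l (B : {set 'I_n}) :
  \sum_(k : Key n | valid p q l k && (k.1 == B)) 1
    <= \sum_(j < p.+1) 'C(minn n (#|B| * sz n l), j).
Proof.
apply: (@leq_trans (\sum_(Z : {set 'I_n} | (Z \subset LL l B) && (#|Z| <= p)) 1)).
  apply: (@leq_trans (\sum_(k : Key n | (k.1 == B) && ((k.2 \subset LL l k.1) && (#|k.2| <= p))) 1)).
    by apply: sum_sub => k /andP [/and4P [_ _ h1 h2] ->]; rewrite h1 h2.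
  rewrite -(pair_big_dep (fun B0 => B0 == B) (fun B0 (Z : {set 'I_n}) => (Z \subset LL l B0) && (#|Z| <= p)) (fun _ _ => 1)) /=.
  by rewrite (big_pred1 B) // => B0.
apply: (leq_trans (@one_le_sum _ (fun Z : {set 'I_n} => (Z \subset LL l B) && (#|Z| <= p)) p.+1 (fun Z => #|Z|) (fun _ => 1) _)).
  by move=> Z /andP [_ h]; rewrite ltnS.
apply: leq_sum => j _.
have H1 : \sum_(Z : {set 'I_n} | (Z \subset LL l B) && (#|Z| <= p) && (#|Z| == j)) 1
   <= #|[set Z : {set 'I_n} | Z \subset LL l B & #|Z| == j]|.
  rewrite -sum1_card; apply: sum_sub => Z /andP [/andP [h1 _] h2]; by rewrite inE h1 h2.
apply: (leq_trans H1).
rewrite cards_draws leq_bin2l // leq_min.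
have -> : LL l B = node l @^-1: B by apply/setP=> x; rewrite !inE.
rewrite (leq_trans (max_card _)) ?card_ord //=.
by apply: fiber_card => //; rewrite expn_gt0.
Qed.


Lemma childcount (P : pred {set 'I_n}) (B : {set 'I_n}) :
  \sum_(B' : {set 'I_n} | P B' && (par B' == B)) 1 <= 4 ^ #|B|.
Proof.
have H : \sum_(B' : {set 'I_n} | P B' && (par B' == B)) 1 <= \sum_(B' : {set 'I_n} | B' \subset @halve n @^-1: B) 1.
  apply: sum_sub => B' /andP [_ /eqP <-]; apply/subsetP=> x hx.
  by rewrite inE imset_f.
apply: (leq_trans H).
rewrite card_powersub (_ : 4 = 2 ^ 2) // -expnM leq_exp2l // mulnC.
by apply: fiber_card.
Qed.

Lemma costS_le l : 0 < n -> l < dd n -> costS n p q l <= 4 * (KK * n ^ maxn p q).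
Proof.
move=> hn hl.
pose P1 (l0 : nat) (B : {set 'I_n}) := (B \subset Tl n l0) && (#|B| <= q).
have hP1 : forall B', P1 l.+1 B' -> P1 l (par B').
  move=> B' /andP [h1 h2]; rewrite /P1 par_valid //=.
  exact: leq_trans (leq_imset_card _ _) h2.
rewrite /costS /keys big_enum /=.
under eq_bigr => k _ do rewrite /srcsS /keys size_filter_enumP.
apply: (@leq_trans (\sum_(B' | P1 l.+1 B') \sum_(k : Key n | valid p q l k && (k.1 == par B')) 1)).
  apply: (@leq_trans (\sum_(k' : Key n | P1 l.+1 k'.1) \sum_(k in [pred k | valid p q l k] |
       (k.1 == par k'.1) && (k.2 :&: LL l.+1 k'.1 == k'.2)) 1)).
    by apply: sum_sub => k'; rewrite inE /valid /P1 => /and4P [-> -> _ _].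
  rewrite (pair_split (P1 l.+1) (fun k' => \sum_(k in [pred k | valid p q l k] |
       (k.1 == par k'.1) && (k.2 :&: LL l.+1 k'.1 == k'.2)) 1)).
  apply: leq_sum => B' _.
  rewrite -(sum_collapse (fun k : Key n => valid p q l k && (k.1 == par B')) (fun k => k.2 :&: LL l.+1 B')).
  by apply: leq_sum => Z _; apply: eq_leq; apply: eq_bigl => k; rewrite inE andbA.
pose G (B : {set 'I_n}) := \sum_(j < p.+1) 'C(minn n (#|B| * sz n l), j).
have H2 : \sum_(B' | P1 l.+1 B') \sum_(k : Key n | valid p q l k && (k.1 == par B')) 1
    <= \sum_(B' | P1 l.+1 B') G (par B').
  by apply: leq_sum => B' _; apply: hc_le.
apply: (leq_trans H2).
rewrite (partition_big (@par n) (P1 l)) //=.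
have H3 : \sum_(B | P1 l B) \sum_(B' | P1 l.+1 B' && (par B' == B)) G (par B')
    <= \sum_(B | P1 l B) G B * 4 ^ #|B|.
  apply: leq_sum => B _.
  rewrite (eq_bigr (fun _ => G B * 1)); last by move=> B' /andP [_ /eqP ->]; rewrite muln1.
  by rewrite -big_distrr /= leq_mul2l childcount orbT.
apply: (leq_trans H3).
apply: (leq_trans (@one_le_sum _ (P1 l) q.+1 (fun B => #|B|) (fun B => G B * 4 ^ #|B|) _)).
  by move=> B /andP [_ h]; rewrite ltnS.
pose x (k j : nat) := 'C(2 ^ l, k) * 4 ^ k * 'C(minn n (k * sz n l), j).
have H4 : forall k : 'I_q.+1, \sum_(B | P1 l B && (#|B| == k)) G B * 4 ^ #|B|
      <= \sum_(j < p.+1) x k j.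
  move=> k.
  rewrite (eq_bigr (fun _ => 1 * (G (setT) * 0 + \sum_(j < p.+1) 'C(minn n (k * sz n l), j) * 4 ^ k))); last first.
    by move=> B /andP [_ /eqP hB]; rewrite muln0 add0n mul1n /G hB big_distrl.
  rewrite -big_distrl /= muln0 add0n.
  have H5 : \sum_(B | P1 l B && (#|B| == k)) 1 <= 'C(2 ^ l, k).
    have H6 : \sum_(B | P1 l B && (#|B| == k)) 1 <= #|[set B : {set 'I_n} | B \subset Tl n l & #|B| == k]|.
      by rewrite -sum1_card; apply: sum_sub => B /andP [/andP [h1 _] h2]; rewrite inE h1 h2.
    by apply: (leq_trans H6); rewrite cards_draws leq_bin2l // card_Tl.
  apply: (leq_trans (leq_mul H5 (leqnn _))).
  rewrite big_distrr /=; apply: leq_sum => j _.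
  by rewrite /x; apply: eq_leq; ring.
have H7 : \sum_(k < q.+1) \sum_(B | P1 l B && (#|B| == k)) G B * 4 ^ #|B|
   <= \sum_(k < q.+1) \sum_(j < p.+1) x k j by apply: leq_sum => k _; apply: H4.
apply: (leq_trans H7).
apply: (dsum (x := x)) => k j hk hj.
have hts : 2 ^ l * sz n l <= 2 * n.
  rewrite /sz -expnD subnKC ?(ltnW hl) // /dd expnS leq_mul2l /=.
  by apply: trunc_logP.
have hs : 0 < sz n l by rewrite /sz expn_gt0.
rewrite /x; apply: (leq_trans (@main_bound n _ _ _ k j hts hs (geq_minl _ _) (geq_minr _ _))).
have hk' : k <= q by rewrite -ltnS.
have hj' : j <= p by rewrite -ltnS.
have hm : maxn k j <= maxn p q by rewrite geq_max !leq_max hk' hj' !orbT.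
rewrite leq_mul2l; apply/orP; right; exact: leq_pexp2l hn hm.
Qed.
End Cost.

Lemma size_bound n p q : (0 < p)%N -> (0 < q)%N -> (p + q <= n)%N ->
  (size (final n p q) <= (3 + 8 * KK) * (n ^ p + n ^ q) * trunc_log 2 n)%N.
Proof.
move=> hp hq hpq.
have [_ _ hs _] := @final_spec n p q hpq _ (fun _ => (0 : int)) (fun _ => (0 : int)).
have hn : (1 < n)%N by rewrite (leq_trans _ hpq) // -(addn1 1) leq_add.
have hn0 : (0 < n)%N by apply: ltnW.
set T := trunc_log 2 n.
have hT : (0 < T)%N by rewrite /T trunc_log_gt0.
set NP := (n ^ maxn p q)%N.
have hNP : (NP <= n ^ p + n ^ q)%N.
  rewrite /NP; case: (leqP p q) => h; first by rewrite leq_addl.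
  by rewrite leq_addr.
have hsum : (\sum_(i < dd n) costS n p q i <= dd n * (4 * (KK * NP)))%N.
  rewrite -[X in (_ <= X * _)%N](card_ord (dd n)) -sum_nat_const.
  by apply: leq_sum => i _; apply: costS_le.
have h0 := cost0_le n p q.
have hp1 := card_ksub_le n p.
have hq1 := card_ksub_le n q.
have hdd : (dd n <= 2 * T)%N by rewrite /dd -/T mul2n -addnn -addn1 leq_add2l.
move: hs h0 hp1 hq1 hsum hNP hdd hT.
move: (\sum_(i < dd n) costS n p q i) => cs.
move: (size _) (cost0 n p q) (#|{: ksub n p}|) (#|{: ksub n q}|) (dd n) KK NP T (n ^ p)%N (n ^ q)%N.
move=> s c0 cp cq d K N T0 A B h1 h2 h3 h4 h5 h6 h7 h8.
have e1 : (cs <= 8 * (K * (A + B) * T0))%N.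
  apply: (leq_trans h5).
  rewrite (_ : (8 * (K * (A + B) * T0) = (2 * T0) * (4 * (K * (A + B))))%N); last by ring.
  by apply: leq_mul => //; apply: leq_mul => //; apply: leq_mul.
have e2 : (A + B <= (A + B) * T0)%N by rewrite leq_pmulr.
rewrite (_ : ((3 + 8 * K) * (A + B) * T0 = 3 * ((A + B) * T0) + 8 * (K * (A + B) * T0))%N); last by ring.
move: e1 e2 h1 h2 h3 h4; move: ((A + B) * T0)%N (K * (A + B) * T0)%N => V W; lia.
Qed.


Unset Implicit Arguments.
Local Open Scope ring_scope.

Theorem mainTheorem10 (S : pzSemiRingType) :
  exists C : nat, forall n p q : nat,
    (0 < p)%N -> (0 < q)%N -> (p + q <= n)%N ->
    exists c : circuit n p q,
      [/\ wf_circuit c, (0 < size c)%N,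
          (size c <= C * (n ^ p + n ^ q) * trunc_log 2 n)%N &
          forall (f : ksub n p -> S) (g : ksub n q -> S),
            circuit_out f g c = disjoint_prod_sum f g].
Proof.
exists (3 + 8 * KK)%N => n p q hp hq hpq.
exists (final n p q).
have [w s0 _ _] := @final_spec n p q hpq S (fun _ => 0) (fun _ => 0).
split; [exact: w | exact: s0 | exact: size_bound hp hq hpq |].
move=> f g; have [_ _ _ ->] := @final_spec n p q hpq S f g.
reflexivity.
Qed.
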